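(* Let $n,k$ be positive integers with $n\ge k$. Then the Jacobi-Stirling numbers $\mathrm{JS}_n^k(z)$ and $(-1)^{n-k}\mathrm{js}_n^k(z)$ are polynomials in $z$ of degree $n-k$ with positive integer coefficients. Moreover, writing $$\mathrm{JS}_n^k(z)=a_{n,k}^{(0)}+a_{n,k}^{(1)}z+\cdots+a_{n,k}^{(n-k)}z^{n-k},\qquad (-1)^{n-k}\mathrm{js}_n^k(z)=b_{n,k}^{(0)}+b_{n,k}^{(1)}z+\cdots+b_{n,k}^{(n-k)}z^{n-k},$$ we have $$a_{n,k}^{(n-k)}=S(n,k),\quad a_{n,k}^{(0)}=U(n,k),\quad b_{n,k}^{(n-k)}=|s(n,k)|,\quad b_{n,k}^{(0)}=|u(n,k)|.$$
   Context: The Jacobi-Stirling numbers of the second kind $\mathrm{JS}_n^k(z)$ and of the first kind $\mathrm{js}_n^k(z)$ are defined for integers $n,k\ge 0$ by $\mathrm{JS}_0^0(z)=\mathrm{js}_0^0(z)=1$, $\mathrm{JS}_n^k(z)=\mathrm{js}_n^k(z)=0$ if $k\notin\{1,\dots,n\}$ (for $(n,k)\neq(0,0)$), and for $n,k\ge1$: $\mathrm{JS}_n^k(z)=\mathrm{JS}_{n-1}^{k-1}(z)+k(k+z)\mathrm{JS}_{n-1}^k(z)$ and $\mathrm{js}_n^k(z)=\mathrm{js}_{n-1}^{k-1}(z)-(n-1)(n-1+z)\mathrm{js}_{n-1}^k(z)$. Equivalently, $x^n=\sum_{k=0}^n\mathrm{JS}_n^k(z)\prod_{i=0}^{k-1}(x-i(z+i))$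 and $\prod_{i=0}^{n-1}(x-i(z+i))=\sum_{k=0}^n\mathrm{js}_n^k(z)x^k$. $S(n,k)$ and $s(n,k)$ are the Stirling numbers of the second and first kind: $x^n=\sum_k S(n,k)\prod_{i=0}^{k-1}(x-i)$ and $\prod_{i=0}^{n-1}(x-i)=\sum_k s(n,k)x^k$. $U(n,k)$ and $u(n,k)$ (central factorial numbers of even indices, $U(n,k)=T(2n,2k)$, $u(n,k)=t(2n,2k)$) are defined by $U(0,0)=u(0,0)=1$, $U(n,k)=u(n,k)=0$ if $k\notin\{1,\dots,n\}$ (for $(n,k)\ne(0,0)$), and for $n,k\ge1$: $U(n,k)=U(n-1,k-1)+k^2U(n-1,k)$, $u(n,k)=u(n-1,k-1)-(n-1)^2u(n-1,k)$. *)

(* Defs.v *)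
From mathcomp Require Import all_boot all_order all_algebra.
Set Implicit Arguments. Unset Strict Implicit. Unset Printing Implicit Defensive.
Import GRing.Theory Num.Theory.
Local Open Scope ring_scope.

Fixpoint JS (n k : nat) : {poly int} :=
  match n, k with
  | 0, 0 => 1
  | 0, _.+1 => 0
  | _.+1, 0 => 0
  | n'.+1, k'.+1 =>
      JS n' k' + ((k'.+1)%:R *: ('X + (k'.+1)%:R%:P)) * JS n' k'.+1
  end.

Fixpoint js (n k : nat) : {poly int} :=
  match n, k with
  | 0, 0 => 1
  | 0, _.+1 => 0
  | _.+1, 0 => 0
  | n'.+1, k'.+1 =>
      js n' k' - (n'%:R *: ('X + n'%:R%:P)) * js n' k'.+1
  end.

Fixpoint stirling2 (n k : nat) : int :=
  match n, k with
  | 0, 0 => 1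
  | 0, _.+1 => 0
  | _.+1, 0 => 0
  | n'.+1, k'.+1 => stirling2 n' k' + (k'.+1)%:R * stirling2 n' k'.+1
  end.

Fixpoint stirling1 (n k : nat) : int :=
  match n, k with
  | 0, 0 => 1
  | 0, _.+1 => 0
  | _.+1, 0 => 0
  | n'.+1, k'.+1 => stirling1 n' k' - n'%:R * stirling1 n' k'.+1
  end.

(* Central factorial numbers U(n,k) = T(2n,2k). *)
Fixpoint cfU (n k : nat) : int :=
  match n, k with
  | 0, 0 => 1
  | 0, _.+1 => 0
  | _.+1, 0 => 0
  | n'.+1, k'.+1 => cfU n' k' + ((k'.+1)%:R ^+ 2) * cfU n' k'.+1
  end.

(* Central factorial numbers u(n,k) = t(2n,2k). *)
Fixpoint cfu (n k : nat) : int :=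
  match n, k with
  | 0, 0 => 1
  | 0, _.+1 => 0
  | _.+1, 0 => 0
  | n'.+1, k'.+1 => cfu n' k' - (n'%:R ^+ 2) * cfu n' k'.+1
  end.

(* Main.v *)
Require Import Defs.
From mathcomp Require Import all_boot all_order all_algebra.
From mathcomp Require Import zify ring lra.
Import GRing.Theory Num.Theory.
Local Open Scope ring_scope.

Definition recP (P : nat -> nat -> {poly int}) (c : nat -> nat -> nat) :=
 [/\ P 0%N 0%N = 1, forall k, P 0%N k.+1 = 0, forall n, P n.+1 0%N = 0 &
     forall n k, P n.+1 k.+1 = P n k + ((c n k)%:R *: ('X + ((c n k)%:R)%:P)) * P n k.+1].

Definition recT (T : nat -> nat -> int) (c : nat -> nat -> nat) :=
 [/\ T 0%N 0%N = 1, forall k, T 0%N k.+1 = 0, forall n, T n.+1 0%N = 0 &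
     forall n k, T n.+1 k.+1 = T n k + (c n k)%:R * T n k.+1].

Definition recZ (T : nat -> nat -> int) (c : nat -> nat -> nat) :=
 [/\ T 0%N 0%N = 1, forall k, T 0%N k.+1 = 0, forall n, T n.+1 0%N = 0 &
     forall n k, T n.+1 k.+1 = T n k + ((c n k)%:R ^+ 2) * T n k.+1].

Lemma coef_step (a : nat) (p : {poly int}) i :
  ((a%:R *: ('X + (a%:R)%:P)) * p)`_i =
  a%:R * (if i is j.+1 then p`_j else 0) + (a%:R ^+ 2) * p`_i.
Proof.
rewrite -scalerAl coefZ mulrDl coefD coefXM coefCM.
case: i => [|i] /=; rewrite ?mulr0 ?add0r; ring.
Qed.

Lemma P_zero {P c} : recP P c -> forall n k, (n < k)%N -> P n k = 0.
Proof.
case=> _ h0 _ hr; elim=> [|n IH] [|k] lt //; try by rewrite h0.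
by rewrite hr !IH ?mulr0 ?addr0 //; lia.
Qed.

Lemma P_nonneg {P c} : recP P c -> forall n k i, 0 <= (P n k)`_i.
Proof.
move=> H; case: (H) => h00 h0 hn hr; elim=> [|n IH] [|k] i.
- by rewrite h00 coef1; case: (i == 0)%N.
- by rewrite h0 coef0.
- by rewrite hn coef0.
rewrite hr coefD coef_step; apply: addr_ge0 => //; apply: addr_ge0.
  by apply: mulr_ge0 => //; case: i.
by apply: mulr_ge0; [apply: exprn_ge0|].
Qed.

Lemma P_vanish {P c} : recP P c ->
  forall n k i, (k <= n)%N -> (n - k < i)%N -> (P n k)`_i = 0.
Proof.
move=> H; case: (H) => h00 h0 hn hr; elim=> [|n IH] [|k] i //= kn lt.
- by rewrite h00 coef1; case: i lt.
- by rewrite hn coef0.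
rewrite hr coefD coef_step (IH k i); [|lia|lia].
case: (ltnP n k.+1) => nk.
  by rewrite (P_zero H _ _ nk); case: i {lt} => [|i]; rewrite ?coef0 !mulr0 ?addr0.
rewrite (IH k.+1 i) //; last by lia.
case: i lt => [|i] lt; first by lia.
by rewrite IH //; [rewrite !mulr0 addr0 | lia].
Qed.

Lemma P_pos {P c} : recP P c -> (forall n, (0 < n)%N -> (0 < c n 0%N)%N) ->
  forall n k i, (k <= n)%N -> (i <= n - k)%N -> (0 < k)%N || (n == 0)%N ->
  0 < (P n k)`_i.
Proof.
move=> H hc; case: (H) => h00 h0 hn hr; elim=> [|n IH] [|k] i //= kn lt ck.
- by case: i lt => // _; rewrite h00 coef1.
rewrite hr coefD coef_step.
have nn := P_nonneg H.
case: k kn lt {ck} => [|k] kn lt.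
  case: n IH kn lt => [|n] IH kn lt.
    by case: i lt => // _; rewrite h00 coef1 /= ltr_wpDr //; apply: addr_ge0 => //;
      apply: mulr_ge0 => //; apply: exprn_ge0.
  rewrite hn coef0 add0r.
  have c0 : (0 < (c n.+1 0%N)%:R :> int) by rewrite ltr0n; apply: hc.
  case: (ltnP i n.+1) => iN.
    apply: ltr_wpDl.
      by apply: mulr_ge0; [apply: ler0n|]; case: i {lt iN} => // *; apply: nn.
    by apply: mulr_gt0; [apply: exprn_gt0| apply: IH => //; lia].
  case: i lt iN => [|i] lt iN; first by lia.
  apply: ltr_wpDr; first by apply: mulr_ge0; [apply: exprn_ge0|].
  by apply: mulr_gt0 => //; apply: IH => //; lia.
apply: ltr_wpDr.
  by apply: addr_ge0; apply: mulr_ge0 => //; [case: i {lt}|apply: exprn_ge0].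
by apply: IH => //; lia.
Qed.

Lemma T_zero {T c} : recT T c -> forall n k, (n < k)%N -> T n k = 0.
Proof.
case=> _ h0 _ hr; elim=> [|n IH] [|k] lt //; try by rewrite h0.
by rewrite hr !IH ?mulr0 ?addr0 //; lia.
Qed.

Lemma P_top {P T c} : recP P c -> recT T c ->
  forall n k, (k <= n)%N -> (P n k)`_(n - k) = T n k.
Proof.
move=> H HT; case: (H) => h00 h0 hn hr; case: (HT) => t00 t0 tn tr.
elim=> [|n IH] [|k] //= kn.
- by rewrite h00 t00 coef1.
- by rewrite hn tn coef0.
rewrite hr tr coefD coef_step subSS IH //.
case: (ltnP k n) => kn'.
  rewrite (P_vanish H n k.+1 (n - k)) // ; last by lia.
  have -> : (n - k = (n - k.+1).+1)%N by lia.
  by rewrite IH // mulr0 addr0.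
have -> : k = n by lia.
by rewrite subnn (P_zero H _ _ (ltnSn n)) (T_zero HT _ _ (ltnSn n)) coef0 !mulr0 addr0.
Qed.

Lemma P_bot {P Z c} : recP P c -> recZ Z c -> forall n k, (P n k)`_0 = Z n k.
Proof.
move=> H HT; case: (H) => h00 h0 hn hr; case: (HT) => t00 t0 tn tr.
elim=> [|n IH] [|k].
- by rewrite h00 t00 coef1.
- by rewrite h0 t0 coef0.
- by rewrite hn tn coef0.
by rewrite hr tr coefD coef_step !IH mulr0 add0r.
Qed.

Lemma Q_zero (R : comNzRingType) (Q : nat -> nat -> R) (d : nat -> R) :
  (forall k, Q 0%N k.+1 = 0) -> (forall n k, Q n.+1 k.+1 = Q n k - d n * Q n k.+1) ->
  forall n k, (n < k)%N -> Q n k = 0.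
Proof.
move=> h0 hr; elim=> [|n IH] [|k] lt //; try by rewrite h0.
by rewrite hr !IH ?mulr0 ?subr0 //; lia.
Qed.

Lemma sign_rec (R : comNzRingType) (Q : nat -> nat -> R) (d : nat -> R) :
  (forall k, Q 0%N k.+1 = 0) -> (forall n k, Q n.+1 k.+1 = Q n k - d n * Q n k.+1) ->
  forall n k, (-1) ^+ (n.+1 - k.+1) * Q n.+1 k.+1 =
    (-1) ^+ (n - k) * Q n k + d n * ((-1) ^+ (n - k.+1) * Q n k.+1).
Proof.
move=> h0 hr n k; rewrite subSS hr.
case: (ltnP k n) => kn.
  rewrite -(subnSK kn) exprS; ring.
by rewrite (Q_zero _ _ _ h0 hr n k.+1) ?mulr0 ?subr0 ?addr0 //; lia.
Qed.

Definition Bjs n k := (-1) ^+ (n - k) * js n k.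
Definition Ts n k : int := (-1) ^+ (n - k) * stirling1 n k.
Definition Tu n k : int := (-1) ^+ (n - k) * cfu n k.

Lemma recP_JS : recP JS (fun _ k => k.+1).
Proof. by split. Qed.
Lemma recT_S : recT stirling2 (fun _ k => k.+1).
Proof. by split. Qed.
Lemma recZ_U : recZ cfU (fun _ k => k.+1).
Proof. by split. Qed.

Lemma recP_js : recP Bjs (fun n _ => n).
Proof.
split => [|k|n|n k]; rewrite /Bjs; [by rewrite mulr1|by rewrite mulr0|by rewrite mulr0|].
exact: (sign_rec _ js (fun n => n%:R *: ('X + (n%:R)%:P)) (fun _ => erefl) (fun _ _ => erefl)).
Qed.
Lemma recT_s : recT Ts (fun n _ => n).
Proof.
split => [|k|n|n k]; rewrite /Ts; [by rewrite mulr1|by rewrite mulr0|by rewrite mulr0|].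
exact: (sign_rec _ stirling1 (fun n => n%:R) (fun _ => erefl) (fun _ _ => erefl)).
Qed.
Lemma recZ_u : recZ Tu (fun n _ => n).
Proof.
split => [|k|n|n k]; rewrite /Tu; [by rewrite mulr1|by rewrite mulr0|by rewrite mulr0|].
exact: (sign_rec _ cfu (fun n => n%:R ^+ 2) (fun _ => erefl) (fun _ _ => erefl)).
Qed.

Lemma size_gen {P c} : recP P c -> (forall n, (0 < n)%N -> (0 < c n 0%N)%N) ->
  forall n k, (0 < k)%N -> (k <= n)%N -> size (P n k) = (n - k).+1.
Proof.
move=> H hc n k k0 kn; apply/eqP; rewrite eqn_leq; apply/andP; split.
  by apply/leq_sizeP => j hj; apply: (P_vanish H) => //; lia.
rewrite ltnNge; apply/negP => /leq_sizeP /(_ (n - k)%N (leqnn _)) e.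
have := P_pos H hc n k (n - k)%N kn (leqnn _); rewrite k0 e Order.POrderTheory.ltxx; by move=> /(_ isT).
Qed.

Theorem theorem1 (n k : nat) : (0 < k)%N -> (k <= n)%N ->
  let A := JS n k in
  let B := (-1) ^+ (n - k) * js n k in
  [/\ size A = (n - k).+1,
      (forall i : nat, (i <= n - k)%N -> 0 < A`_i),
      size B = (n - k).+1,
      (forall i : nat, (i <= n - k)%N -> 0 < B`_i) &
      [/\ A`_(n - k) = stirling2 n k,
          A`_0 = cfU n k,
          B`_(n - k) = `|stirling1 n k| &
          B`_0 = `|cfu n k| ]].
Proof.
move=> k0 kn /=.
have hc1 : forall n, (0 < n)%N -> (0 < (fun (_ : nat) k => k.+1) n 0%N)%N by [].
have hc2 : forall n, (0 < n)%N -> (0 < (fun n (_ : nat) => n) n 0%N)%N by [].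
have eB : (-1) ^+ (n - k) * js n k = Bjs n k by [].
rewrite eB; split.
- exact: (size_gen recP_JS hc1).
- by move=> i hi; apply: (P_pos recP_JS hc1) => //; rewrite k0.
- exact: (size_gen recP_js hc2).
- by move=> i hi; apply: (P_pos recP_js hc2) => //; rewrite k0.
split.
- exact: (P_top recP_JS recT_S).
- exact: (P_bot recP_JS recZ_U).
- rewrite (P_top recP_js recT_s) // -(normrMsign (n - k)) ger0_norm //.
  by rewrite -/(Ts n k) -(P_top recP_js recT_s) //; apply: (P_nonneg recP_js).
- rewrite (P_bot recP_js recZ_u) // -(normrMsign (n - k)) ger0_norm //.
  by rewrite -/(Tu n k) -(P_bot recP_js recZ_u) //; apply: (P_nonneg recP_js).
Qed.
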